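(* Let $m \ge 2$, $n\ge 2$, and for $1 \le i \le m$ let $f_i(x) = x^T A_i x + c_i^T x + d_i$ be quadratics on $\mathbb{R}^n$ with $A_i$ symmetric, where $f_1(x) = \|x\|^2 - 1$ (i.e. $A_1 = I$, $c_1 = 0$, $d_1 = -1$). For $2 \le i \le m$ let $U_i > 0$ satisfy $|f_i(x)| \le U_i$ for all $x$ with $\|x\|^2 \le 2$. Consider the system in the real variables $v_0, x_1,\ldots,x_n, s_1,\ldots,s_m, w_2,\ldots,w_m$: $$(\mathrm{a})\quad x^T A_i x + c_i^T v_0 x + d_i v_0^2 + s_i^2 = 0, \quad 1 \le i \le m,$$ $$(\mathrm{b})\quad \frac{s_i^2 + w_i^2}{U_i} - v_0^2 = 0, \quad 2 \le i \le m,$$ $$(\mathrm{c})\quad \|x\|^2 + s_1^2 + \sum_{i=2}^m \frac{s_i^2 + w_i^2}{U_i} + v_0^2 = m+1.$$ Let $0 \le \delta < 1$ and suppose $\hat z = (\hat v_0, \hat x, \hat s, \hat w)$ is $\delta$-feasible for the equations (a) and (b). Then (i) $$m\hat v_0^2 - m\delta \le \|\hat x\|^2 + \hat s_1^2 + \sum_{i=2}^m \frac{\hat s_i^2 + \hat w_i^2}{U_i} \le m \hat v_0^2 + m\delta;$$ (ii) if $\hat z$ is also $\delta$-feasible for (c), then $1 - \delta \le \hat v_0^2 \le 1 + \delta$.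
   Context: A vector is $\delta$-feasible for an equation $h = 0$ if $|h| \le \delta$ at that vector (i.e. it is $\delta$-feasible for both inequalities $h \le 0$ and $-h \le 0$). *)

(* Defs.v *)
From mathcomp Require Import all_boot all_order all_algebra.
Set Implicit Arguments. Unset Strict Implicit. Unset Printing Implicit Defensive.
Import Order.TTheory GRing.Theory Num.Theory.
Local Open Scope ring_scope.

Definition sqnorm (R : realFieldType) (n : nat) (x : 'cV[R]_n) : R :=
  \sum_(j < n) x j 0 ^+ 2.

Definition qform (R : realFieldType) (n : nat) (A : 'M[R]_n) (x : 'cV[R]_n) : R :=
  (x^T *m A *m x) 0 0.

Definition lform (R : realFieldType) (n : nat) (c x : 'cV[R]_n) : R :=
  (c^T *m x) 0 0.

Definition quad (R : realFieldType) (n : nat) (A : 'M[R]_n) (c : 'cV[R]_n) (d : R)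
  (x : 'cV[R]_n) : R := qform A x + lform c x + d.

Definition delta_feasible_eq (R : realFieldType) (delta h : R) : Prop :=
  `|h| <= delta.

(* Main.v *)
Require Import Defs.
From mathcomp Require Import all_boot all_order all_algebra.
From mathcomp Require Import lra.
Import Order.TTheory GRing.Theory Num.Theory.
Local Open Scope ring_scope.

Lemma qform1 (R : realFieldType) n (x : 'cV[R]_n) : qform 1%:M x = sqnorm x.
Proof.
rewrite /qform /sqnorm mulmx1 mxE; apply: eq_bigr => j _.
by rewrite mxE expr2.
Qed.

Theorem lemma1 (R : realFieldType) (m n : nat)
  (A : nat -> 'M[R]_n) (c : nat -> 'cV[R]_n) (d : nat -> R) (U : nat -> R)
  (v0 : R) (x : 'cV[R]_n) (s w : nat -> R) (delta : R) :
  (2 <= m)%N -> (2 <= n)%N ->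
  (forall i, (1 <= i <= m)%N -> (A i)^T = A i) ->
  A 1%N = 1%:M -> c 1%N = 0 -> d 1%N = -1 ->
  (forall i, (2 <= i <= m)%N -> 0 < U i) ->
  (forall i, (2 <= i <= m)%N -> forall y : 'cV[R]_n,
      sqnorm y <= 2 -> `|quad (A i) (c i) (d i) y| <= U i) ->
  0 <= delta -> delta < 1 ->
  (* (a) delta-feasible *)
  (forall i, (1 <= i <= m)%N ->
     delta_feasible_eq delta
       (qform (A i) x + v0 * lform (c i) x + d i * v0 ^+ 2 + s i ^+ 2)) ->
  (* (b) delta-feasible *)
  (forall i, (2 <= i <= m)%N ->
     delta_feasible_eq delta ((s i ^+ 2 + w i ^+ 2) / U i - v0 ^+ 2)) ->
  (* (i) *)
  (m%:R * v0 ^+ 2 - m%:R * delta <=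
     sqnorm x + s 1%N ^+ 2 + \sum_(2 <= i < m.+1) (s i ^+ 2 + w i ^+ 2) / U i
   /\ sqnorm x + s 1%N ^+ 2 + \sum_(2 <= i < m.+1) (s i ^+ 2 + w i ^+ 2) / U i
     <= m%:R * v0 ^+ 2 + m%:R * delta)
  /\
  (* (ii) *)
  (delta_feasible_eq delta
     (sqnorm x + s 1%N ^+ 2 + \sum_(2 <= i < m.+1) (s i ^+ 2 + w i ^+ 2) / U i
        + v0 ^+ 2 - (m%:R + 1)) ->
   1 - delta <= v0 ^+ 2 /\ v0 ^+ 2 <= 1 + delta).
Proof.
move=> hm hn _ hA1 hc1 hd1 _ _ hd0 hd1' ha hb.
have h1 := ha 1%N (ltnW hm).
rewrite /delta_feasible_eq hA1 hc1 hd1 qform1 /lform trmx0 mul0mx mxE in h1.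
set T := \sum_(2 <= i < m.+1) _.
have hlo : \sum_(2 <= i < m.+1) (v0 ^+ 2 - delta) <= T.
  rewrite big_nat [T]big_nat; apply: ler_sum => i /andP[hi1 hi2].
  have := hb i; rewrite /delta_feasible_eq ler_norml hi1 /= => /(_ hi2) /andP[u _].
  lra.
have hhi : T <= \sum_(2 <= i < m.+1) (v0 ^+ 2 + delta).
  rewrite big_nat [T]big_nat; apply: ler_sum => i /andP[hi1 hi2].
  have := hb i; rewrite /delta_feasible_eq ler_norml hi1 /= => /(_ hi2) /andP[_ u].
  lra.
rewrite !sumr_const_nat in hlo hhi.
have em : (m.+1 - 2)%N = (m - 1)%N by rewrite subSS.
rewrite em in hlo hhi.
rewrite mulrnBl mulrnDl in hlo hhi.
rewrite ler_norml in h1; case/andP: h1 => h1a h1b.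
rewrite mulr0 addr0 mulN1r in h1a h1b.
have hmS : m = (m - 1).+1 by rewrite -addn1 subnK // (leq_trans _ hm).
have hi : m%:R * v0 ^+ 2 - m%:R * delta <= sqnorm x + s 1%N ^+ 2 + T /\
          sqnorm x + s 1%N ^+ 2 + T <= m%:R * v0 ^+ 2 + m%:R * delta.
  rewrite !mulr_natl hmS !mulrS.
  move: hlo hhi; move: (v0 ^+ 2 *+ (m - 1)) (delta *+ (m - 1)) => a b.
  move=> ? ?; split; lra.
split => //.
rewrite /delta_feasible_eq ler_norml => /andP[c1 c2].
case: hi => hi1 hi2.
have hm1 : 0 < m%:R + 1 :> R by rewrite ltr_wpDl.
split.
- have : (m%:R + 1) * (1 - delta) <= (m%:R + 1) * v0 ^+ 2.
    move: hi1 hi2 c1 c2; rewrite !mulrDl ?mulrBr ?mulrDr !mul1r ?mulr1 ?mulrN.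
    move: (m%:R * v0 ^+ 2) (m%:R * delta) (m%:R : R) => a b e; lra.
  by rewrite ler_pM2l.
- have : (m%:R + 1) * v0 ^+ 2 <= (m%:R + 1) * (1 + delta).
    move: hi1 hi2 c1 c2; rewrite !mulrDl ?mulrDr !mul1r ?mulr1.
    move: (m%:R * v0 ^+ 2) (m%:R * delta) (m%:R : R) => a b e; lra.
  by rewrite ler_pM2l.
Qed.
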